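(* Let $D_0=\mathbb{D}$ and $D_j=D_{j-1}\setminus\mathcal{Z}_{j-1}$ for $j=1,2,\dots$, where each $\mathcal{Z}_{j-1}$ is a discrete set in $D_{j-1}$. Then every $D_j$ has the $3$-rd Hindmarsh property.
   Context: $\mathbb{D}$ is the open unit disk. A set $\mathcal{Z}\subset D$ is discrete in $D$ if it is at most countable with no accumulation points in $D$. A Schur function is an analytic $S:\mathbb{D}\to\mathbb{C}$ with $|S|\le1$. Pick matrix: $P_k(f;z_1,\dots,z_k)=\left[\frac{1-f(z_i)\overline{f(z_j)}}{1-z_i\overline{z_j}}\right]_{i,j=1}^k$. For an integer $k\ge3$, an open set $D\subseteq\mathbb{D}$ has the $k$-th Hindmarsh property if every function $f:D\to\mathbb{C}$ such that $P_k(f;z_1,\dots,z_k)$ is positive semidefinite for every choice of distinct $z_1,\dots,z_k\in D$ admits an extension to a Schur function on $\mathbb{D}$. Hindmarsh's theorem (may be assumed): $\mathbb{D}$ has the $3$-rd Hindmarsh property; more precisely, if $U\subseteq\mathbb{D}$ is open and $f:U\to\mathbb{C}$ has $P_3(f;z_1,z_2,z_3)\ge0$ for all $z_1,z_2,z_3\in U$, then $f$ is analytic on $U$ with $|f|\le1$. *)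

(* Defs.v *)
From Stdlib Require Import Reals.
From Coquelicot Require Import Coquelicot.
Open Scope R_scope.

Definition unit_disk (z : C) : Prop := Cmod z < 1.

Definition analytic_on (U : C -> Prop) (f : C -> C) : Prop :=
  forall z, U z -> @ex_derive C_AbsRing C_NormedModule f z.

Definition schur_function (S : C -> C) : Prop :=
  analytic_on unit_disk S /\ forall z, unit_disk z -> Cmod (S z) <= 1.

Definition at_most_countable (Z : C -> Prop) : Prop :=
  exists e : nat -> C, forall z, Z z -> exists n, e n = z.

Definition discrete_in (Z D : C -> Prop) : Prop :=
  (forall z, Z z -> D z) /\ at_most_countable Z /\
  forall w, D w -> exists eps : R, 0 < eps /\
    forall z, Z z -> 0 < Cmod (z - w) < eps -> False.

Definition pick_entry (f : C -> C) (z : nat -> C) (i j : nat) : C :=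
  ((1 - f (z i) * Cconj (f (z j))) / (1 - z i * Cconj (z j)))%C.

Definition pick_form (k : nat) (f : C -> C) (z : nat -> C) (c : nat -> C) : C :=
  sum_n (fun i => sum_n (fun j => (Cconj (c i) * pick_entry f z i j * c j)%C) (k - 1))
        (k - 1).

Definition pick_psd (k : nat) (f : C -> C) (z : nat -> C) : Prop :=
  forall c : nat -> C, Im (pick_form k f z c) = 0 /\ 0 <= Re (pick_form k f z c).

Definition hindmarsh_property (k : nat) (D : C -> Prop) : Prop :=
  open D /\ (forall z, D z -> unit_disk z) /\
  forall f : C -> C,
    (forall z : nat -> C,
        (forall i, (i < k)%nat -> D (z i)) ->
        (forall i j, (i < k)%nat -> (j < k)%nat -> i <> j -> z i <> z j) ->
        pick_psd k f z) ->
    exists S : C -> C, schur_function S /\ forall z, D z -> S z = f z.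

(* Main.v *)
Require Import Defs.
From Stdlib Require Import Reals Lra Psatz Classical FunctionalExtensionality ClassicalEpsilon.
From Coquelicot Require Import Coquelicot.
Open Scope R_scope.

Lemma Cconj_inv_all (x : C) : Cconj (/ x) = (/ Cconj x)%C.
Proof.
  destruct x as [a b]. unfold Cconj, Cinv; simpl.
  replace (a * (a * 1) + - b * (- b * 1)) with (a * (a * 1) + b * (b * 1)) by ring.
  f_equal; unfold Rdiv; ring.
Qed.

Lemma Cconj_R (r : R) : Cconj (RtoC r) = RtoC r.
Proof. unfold Cconj, RtoC; simpl; f_equal; ring. Qed.

Lemma Cconj_div_all (x y : C) : Cconj (x / y) = (Cconj x / Cconj y)%C.
Proof. unfold Cdiv. rewrite Cmult_conj, Cconj_inv_all. reflexivity. Qed.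

Ltac pushconj :=
  repeat (rewrite ?Cconj_div_all, ?Cmult_conj, ?Cminus_conj, ?Cplus_conj, ?Copp_conj,
            ?Cconj_inv_all, ?Cconj_conj, ?Cconj_R).

Definition Kf (h : C -> C) (x y : C) : C := ((1 - h x * Cconj (h y)) / (1 - x * Cconj y))%C.

Lemma Kf_conj h x y : Cconj (Kf h x y) = Kf h y x.
Proof.
  unfold Kf. pushconj. rewrite (Cmult_comm (Cconj (h x))), (Cmult_comm (Cconj x)). reflexivity.
Qed.

Definition form2 (A B B' C0 c0 c1 : C) : C :=
  (Cconj c0 * A * c0 + Cconj c0 * B * c1 + Cconj c1 * B' * c0 + Cconj c1 * C0 * c1)%C.

Lemma form2_re A B C0 c0 c1 :
  Re (form2 A B (Cconj B) C0 c0 c1) =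
  (fst c0 ^2 + snd c0 ^2) * fst A + (fst c1 ^2 + snd c1 ^2) * fst C0
  + 2 * ((fst c0 * fst B + snd c0 * snd B) * fst c1 - (fst c0 * snd B - snd c0 * fst B) * snd c1).
Proof.
  destruct A as [a1 a2], B as [b1 b2], C0 as [e1 e2], c0 as [p q], c1 as [r s].
  unfold form2, Re, Cconj, Cmult, Cplus; simpl. ring.
Qed.

Lemma Cmod_sq (z : C) : Cmod z ^ 2 = fst z ^ 2 + snd z ^ 2.
Proof. rewrite Cmod2_alt. reflexivity. Qed.

Lemma psd2 (A B C0 : C) :
  (forall c0 c1, 0 <= Re (form2 A B (Cconj B) C0 c0 c1)) ->
  0 <= Re A /\ 0 <= Re C0 /\ Cmod B ^ 2 <= Re A * Re C0.
Proof.
  intros H.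
  assert (HA := H (RtoC 1) (RtoC 0)). rewrite form2_re in HA.
  assert (HC := H (RtoC 0) (RtoC 1)). rewrite form2_re in HC.
  assert (H1 := H (fst C0, 0) (-fst B, snd B)). rewrite form2_re in H1.
  assert (H2 : forall t, 0 <= Re (form2 A B (Cconj B) C0 (1,0) (-(t*fst B), t * snd B))) by (intros; apply H).
  setoid_rewrite form2_re in H2.
  clear H.
  unfold RtoC in HA, HC; simpl in HA, HC, H1, H2.
  rewrite Cmod_sq. unfold Re.
  destruct A as [a1 a2], B as [b1 b2], C0 as [e1 e2]; simpl in *.
  assert (a1 >= 0) by nra. assert (e1 >= 0) by nra.
  repeat split; try lra.
  destruct (Rlt_or_le 0 e1) as [He|He].
  - assert (e1 * (a1*e1 - (b1^2+b2^2)) >= 0) by nra. nra.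
  - assert (e1 = 0) by lra. subst e1.
    destruct (Rlt_or_le 0 (b1^2+b2^2)) as [Hb|Hb]; [|nra].
    set (t := (a1 + 1) / (2 * (b1^2+b2^2))).
    specialize (H2 t).
    assert (Ht : 2 * t * (b1^2+b2^2) = a1 + 1) by (unfold t; field; lra).
    nra.
Qed.

Lemma pick3_expand f z c : pick_form 3 f z c =
  ((Cconj (c 0%nat) * Kf f (z 0%nat) (z 0%nat) * c 0%nat + Cconj (c 0%nat) * Kf f (z 0%nat) (z 1%nat) * c 1%nat)
    + Cconj (c 0%nat) * Kf f (z 0%nat) (z 2%nat) * c 2%nat
  + (Cconj (c 1%nat) * Kf f (z 1%nat) (z 0%nat) * c 0%nat + Cconj (c 1%nat) * Kf f (z 1%nat) (z 1%nat) * c 1%nat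
    + Cconj (c 1%nat) * Kf f (z 1%nat) (z 2%nat) * c 2%nat)
  + (Cconj (c 2%nat) * Kf f (z 2%nat) (z 0%nat) * c 0%nat + Cconj (c 2%nat) * Kf f (z 2%nat) (z 1%nat) * c 1%nat
    + Cconj (c 2%nat) * Kf f (z 2%nat) (z 2%nat) * c 2%nat))%C.
Proof.
  unfold pick_form. simpl. repeat (rewrite sum_Sn || rewrite sum_O). reflexivity.
Qed.

Lemma Cmod_minus_le (a b : C) : Cmod (a - b) <= Cmod a + Cmod b.
Proof. unfold Cminus. rewrite <- (Cmod_opp b). apply Cmod_triangle. Qed.

Lemma Cmod_minus_ge (a b : C) : Cmod a - Cmod b <= Cmod (a - b).
Proof.
  assert (Cmod a <= Cmod (a - b) + Cmod b).
  { replace a with ((a - b) + b)%C at 1 by ring. apply Cmod_triangle. }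
  lra.
Qed.

Lemma one_minus_nz (z w : C) : Cmod z < 1 -> Cmod w < 1 -> (1 - z * Cconj w)%C <> 0.
Proof.
  intros Hz Hw E.
  assert (Cmod (z * Cconj w) = 1).
  { replace (z * Cconj w)%C with (RtoC 1) by (rewrite <- (Cplus_0_l (z * Cconj w)); rewrite <- E; ring).
    apply Cmod_1. }
  rewrite Cmod_mult, Cmod_conj in H.
  assert (0 <= Cmod z) by apply Cmod_ge_0. assert (0 <= Cmod w) by apply Cmod_ge_0.
  nra.
Qed.

Lemma idC (x y : C) :
  Cmod (1 - x * Cconj y) ^ 2 = (1 - Cmod x ^ 2) * (1 - Cmod y ^ 2) + Cmod (x - y) ^ 2.
Proof.
  rewrite !Cmod_sq. destruct x as [a b], y as [c d]. simpl. ring.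
Qed.

Lemma Kf_diag h z : Cmod z < 1 -> Kf h z z = RtoC ((1 - Cmod (h z) ^ 2) / (1 - Cmod z ^ 2)).
Proof.
  intros Hz. unfold Kf. rewrite <- !Cmod2_conj.
  rewrite RtoC_div.
  - rewrite !RtoC_minus. reflexivity.
  - assert (0 <= Cmod z) by apply Cmod_ge_0. nra.
Qed.

Lemma two_point h z w :
  Cmod z < 1 -> Cmod w < 1 ->
  (forall c0 c1, 0 <= Re (form2 (Kf h z z) (Kf h z w) (Kf h w z) (Kf h w w) c0 c1)) ->
  Cmod (h z) <= 1 /\ Cmod (h w) <= 1 /\
  Cmod (h z - h w) ^ 2 * Cmod (1 - z * Cconj w) ^ 2 <=
  Cmod (1 - h z * Cconj (h w)) ^ 2 * Cmod (z - w) ^ 2.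
Proof.
  intros Hz Hw H.
  rewrite <- (Kf_conj h z w) in H.
  destruct (psd2 _ _ _ H) as [HA [HC HD]].
  rewrite (Kf_diag h z) in HA, HD by auto. rewrite (Kf_diag h w) in HC, HD by auto. rewrite !re_RtoC in HA, HC, HD.
  assert (Hnz := one_minus_nz z w Hz Hw).
  unfold Kf at 1 in HD. rewrite Cmod_div in HD by auto.
  assert (Y : 0 < Cmod (1 - z * Cconj w)) by (apply Cmod_gt_0; auto).
  pose proof (idC (h z) (h w)) as I1. pose proof (idC z w) as I2.
  set (ns := Cmod (h z)) in *. set (nt := Cmod (h w)) in *.
  set (nz := Cmod z) in *. set (nw := Cmod w) in *.
  set (X := Cmod (1 - h z * Cconj (h w))) in *.
  set (Yv := Cmod (1 - z * Cconj w)) in *.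
  assert (0 <= ns) by apply Cmod_ge_0. assert (0 <= nt) by apply Cmod_ge_0.
  assert (0 <= nz) by apply Cmod_ge_0. assert (0 <= nw) by apply Cmod_ge_0.
  assert (Dz : 0 < 1 - nz^2) by nra. assert (Dw : 0 < 1 - nw^2) by nra.
  assert (Hs : 0 <= 1 - ns^2).
  { apply Rmult_le_reg_r with (/(1 - nz^2)). apply Rinv_0_lt_compat; lra. lra. }
  assert (Ht : 0 <= 1 - nt^2).
  { apply Rmult_le_reg_r with (/(1 - nw^2)). apply Rinv_0_lt_compat; lra. lra. }
  repeat split; try nra.
  assert (HD' : X^2 * ((1 - nz^2)*(1-nw^2)) <= ((1-ns^2)*(1-nt^2)) * Yv^2).
  { replace (X^2 * ((1 - nz^2)*(1-nw^2))) with ((X / Yv)^2 * (Yv^2 * ((1 - nz^2)*(1-nw^2)))) by (field; lra).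
    replace (((1-ns^2)*(1-nt^2)) * Yv^2) with (((1 - ns ^ 2) / (1 - nz ^ 2) * ((1 - nt ^ 2) / (1 - nw ^ 2))) * (Yv^2 * ((1 - nz^2)*(1-nw^2)))) by (field; lra).
    apply Rmult_le_compat_r; [|exact HD].
    apply Rmult_le_pos; [nra|]. apply Rmult_le_pos; lra. }
  nra.
Qed.

Definition R3 (h : C -> C) (E : C -> Prop) : Prop :=
  forall z : nat -> C, (forall i, (i < 3)%nat -> E (z i)) ->
    (forall i j, (i < 3)%nat -> (j < 3)%nat -> i <> j -> z i <> z j) ->
    forall c, 0 <= Re (pick_form 3 h z c).

Definition pts3 (a b c : C) : nat -> C :=
  fun i => match i with 0%nat => a | 1%nat => b | _ => c end.

Lemma pts3_in (E : C -> Prop) a b c : E a -> E b -> E c -> forall i, (i < 3)%nat -> E (pts3 a b c i).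
Proof. intros Ha Hb Hc i Hi. destruct i as [|[|[|i]]]; simpl; auto; lia. Qed.

Lemma pts3_dist a b c : a <> b -> a <> c -> b <> c ->
  forall i j, (i < 3)%nat -> (j < 3)%nat -> i <> j -> pts3 a b c i <> pts3 a b c j.
Proof.
  intros Hab Hac Hbc i j Hi Hj Hij.
  destruct i as [|[|[|i]]]; destruct j as [|[|[|j]]]; simpl; try lia; auto.
Qed.

Lemma Cconj0 : Cconj (RtoC 0) = RtoC 0.
Proof. apply Cconj_R. Qed.

Lemma R3_form2 h E z w x : R3 h E -> E z -> E w -> E x -> z <> w -> z <> x -> w <> x ->
  forall c0 c1, 0 <= Re (form2 (Kf h z z) (Kf h z w) (Kf h w z) (Kf h w w) c0 c1).
Proof.
  intros HR Hz Hw Hx Hzw Hzx Hwx c0 c1.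
  assert (H := HR (pts3 z w x) (pts3_in E z w x Hz Hw Hx) (pts3_dist z w x Hzw Hzx Hwx) (pts3 c0 c1 0)).
  rewrite pick3_expand in H. cbv beta iota delta [pts3] in H. rewrite Cconj0 in H.
  replace (form2 (Kf h z z) (Kf h z w) (Kf h w z) (Kf h w w) c0 c1) with
   ((Cconj c0 * Kf h z z * c0 + Cconj c0 * Kf h z w * c1 + Cconj c0 * Kf h z x * 0 +
      (Cconj c1 * Kf h w z * c0 + Cconj c1 * Kf h w w * c1 + Cconj c1 * Kf h w x * 0) +
      (0 * Kf h x z * c0 + 0 * Kf h x w * c1 + 0 * Kf h x x * 0)))%C.
  exact H. unfold form2. ring.
Qed.

Definition dense_disk (E : C -> Prop) : Prop :=
  forall p, Cmod p < 1 -> forall d, 0 < d -> exists x, E x /\ Cmod (x - p) < d.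

Lemma Cmod_sym (a b : C) : Cmod (a - b) = Cmod (b - a).
Proof. rewrite <- Cmod_opp. f_equal. ring. Qed.

Lemma Cmod_RtoC_pos (r : R) : 0 <= r -> Cmod (RtoC r) = r.
Proof. intros. rewrite Cmod_R. apply Rabs_right. lra. Qed.

Lemma thirdpt E : dense_disk E -> forall z w, exists x, E x /\ x <> z /\ x <> w.
Proof.
  intros HE z w.
  assert (Hp : exists p, Cmod p < 1 /\ p <> z /\ p <> w).
  { destruct (classic (RtoC 0 = z)) as [H0|H0].
    - destruct (classic (RtoC (1/2) = w)) as [H1|H1].
      + exists (RtoC (1/4)). rewrite Cmod_RtoC_pos by lra. split; [lra|].
        subst. split; intro E'; apply RtoC_inj in E'; lra.
      + destruct (classic (RtoC (1/2) = z)) as [H2|H2].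
        * subst. apply RtoC_inj in H2. lra.
        * exists (RtoC (1/2)). rewrite Cmod_RtoC_pos by lra. repeat split; auto; lra.
    - destruct (classic (RtoC 0 = w)) as [H1|H1].
      + destruct (classic (RtoC (1/2) = z)) as [H2|H2].
        * exists (RtoC (1/4)). rewrite Cmod_RtoC_pos by lra. split; [lra|].
          subst. split; intro E'; apply RtoC_inj in E'; lra.
        * exists (RtoC (1/2)). rewrite Cmod_RtoC_pos by lra. repeat split; auto; try lra.
          subst. intro E'; apply RtoC_inj in E'; lra.
      + exists (RtoC 0). rewrite Cmod_0. repeat split; auto; lra. }
  destruct Hp as [p [Hp1 [Hp2 Hp3]]].
  assert (Hz : 0 < Cmod (p - z)) by (apply Cmod_gt_0; intro E'; apply Hp2; apply Ceq_minus; auto).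
  assert (Hw : 0 < Cmod (p - w)) by (apply Cmod_gt_0; intro E'; apply Hp3; apply Ceq_minus; auto).
  destruct (HE p Hp1 (Rmin (Cmod (p - z)) (Cmod (p - w)))) as [x [Hx1 Hx2]].
  { apply Rmin_pos; auto. }
  exists x. repeat split; auto.
  - intro; subst x. rewrite Cmod_sym in Hx2. pose proof (Rmin_l (Cmod (p - z)) (Cmod (p - w))). lra.
  - intro; subst x. rewrite Cmod_sym in Hx2. pose proof (Rmin_r (Cmod (p - z)) (Cmod (p - w))). lra.
Qed.

Definition Lip2 (s t z w : C) : Prop :=
  Cmod (s - t) ^ 2 * Cmod (1 - z * Cconj w) ^ 2 <= Cmod (1 - s * Cconj t) ^ 2 * Cmod (z - w) ^ 2.

Lemma R3_lip h E : (forall x, E x -> Cmod x < 1) -> dense_disk E -> R3 h E ->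
  (forall z, E z -> Cmod (h z) <= 1) /\
  (forall z w, E z -> E w -> Lip2 (h z) (h w) z w).
Proof.
  intros Hsub Hd HR. split.
  - intros z Hz. destruct (thirdpt E Hd z z) as [w [Hw [Hwz _]]].
    destruct (thirdpt E Hd z w) as [x [Hx [Hxz Hxw]]].
    apply (two_point h z w (Hsub z Hz) (Hsub w Hw)).
    apply (R3_form2 h E z w x); auto.
  - intros z w Hz Hw. destruct (classic (z = w)) as [E'|E'].
    + subst. unfold Lip2. replace (h w - h w)%C with (RtoC 0) by ring.
      replace (w - w)%C with (RtoC 0) by ring. rewrite Cmod_0. nra.
    + destruct (thirdpt E Hd z w) as [x [Hx [Hxz Hxw]]].
      apply (two_point h z w (Hsub z Hz) (Hsub w Hw)).
      apply (R3_form2 h E z w x); auto.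
Qed.

Lemma lip_bound (s t z w : C) (r : R) :
  Cmod z <= r -> Cmod w <= r -> r < 1 -> Cmod s <= 1 -> Cmod t <= 1 -> Lip2 s t z w ->
  Cmod (s - t) * (1 - r) <= 2 * Cmod (z - w).
Proof.
  intros Hz Hw Hr Hs Ht HL. unfold Lip2 in HL.
  assert (A1 : Cmod (1 - s * Cconj t) <= 2).
  { pose proof (Cmod_minus_le 1 (s * Cconj t)). rewrite Cmod_mult, Cmod_conj, Cmod_1 in H.
    assert (0 <= Cmod s) by apply Cmod_ge_0. assert (0 <= Cmod t) by apply Cmod_ge_0. nra. }
  assert (A2 : 1 - r <= Cmod (1 - z * Cconj w)).
  { pose proof (Cmod_minus_ge 1 (z * Cconj w)). rewrite Cmod_mult, Cmod_conj, Cmod_1 in H.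
    assert (0 <= Cmod z) by apply Cmod_ge_0. assert (0 <= Cmod w) by apply Cmod_ge_0. nra. }
  assert (0 <= Cmod (s - t)) by apply Cmod_ge_0.
  assert (0 <= Cmod (z - w)) by apply Cmod_ge_0.
  assert (0 <= Cmod (1 - s * Cconj t)) by apply Cmod_ge_0.
  assert (0 <= 1 - r) by (pose proof (Cmod_ge_0 z); lra).
  assert (Hsq : (Cmod (s - t) * (1 - r))^2 <= (2 * Cmod (z - w))^2).
  { apply Rle_trans with (Cmod (s - t) ^ 2 * Cmod (1 - z * Cconj w) ^ 2).
    - rewrite Rpow_mult_distr. apply Rmult_le_compat_l. nra. nra.
    - apply Rle_trans with (1 := HL). rewrite Rpow_mult_distr. apply Rmult_le_compat_r. nra. nra. }
  nra.
Qed.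

Definition clim {T} (F : (T -> Prop) -> Prop) (u : T -> C) (l : C) : Prop :=
  forall eps, 0 < eps -> F (fun x => Cmod (u x - l) < eps).

Lemma clim_filterlim {T} (F : (T -> Prop) -> Prop) {FF : Filter F} u l :
  clim F u l <-> filterlim u F (locally l).
Proof.
  split; intros H.
  - apply (filterlim_locally_ball_norm (K := C_AbsRing) (U := C_NormedModule)).
    intros eps. apply (H eps (cond_pos eps)).
  - intros eps Heps.
    apply (filterlim_locally_ball_norm (K := C_AbsRing) (U := C_NormedModule)) with (eps := mkposreal eps Heps) in H.
    exact H.
Qed.

Section Lims.
Context {T : Type} (F : (T -> Prop) -> Prop) {FF : Filter F}.

Lemma clim_add u v a b : clim F u a -> clim F v b -> clim F (fun x => u x + v x)%C (a + b)%C.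
Proof.
  intros Hu Hv. apply (clim_filterlim F (FF := FF)). apply (clim_filterlim F (FF := FF)) in Hu. apply (clim_filterlim F (FF := FF)) in Hv.
  exact (filterlim_comp_2 u v Cplus Hu Hv (filterlim_plus (K := C_AbsRing) (V := C_NormedModule) a b)).
Qed.

Lemma clim_mul u v a b : clim F u a -> clim F v b -> clim F (fun x => u x * v x)%C (a * b)%C.
Proof.
  intros Hu Hv eps Heps.
  assert (Ha := Cmod_ge_0 a). assert (Hb := Cmod_ge_0 b).
  set (d := Rmin 1 (eps / (Cmod a + Cmod b + 1))).
  assert (Hd : 0 < d) by (apply Rmin_pos; [lra|apply Rdiv_lt_0_compat; lra]).
  apply filter_imp with (2 := filter_and _ _ (Hu d Hd) (Hv d Hd)).
  intros x [H1 H2].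
  assert (d <= 1) by apply Rmin_l. assert (d <= eps / (Cmod a + Cmod b + 1)) by apply Rmin_r.
  assert (Hux : Cmod (u x) <= Cmod a + 1).
  { pose proof (Cmod_minus_ge (u x) a). lra. }
  replace (u x * v x - a * b)%C with (u x * (v x - b) + b * (u x - a))%C by ring.
  eapply Rle_lt_trans. apply Cmod_triangle. rewrite !Cmod_mult.
  assert (0 <= Cmod (u x)) by apply Cmod_ge_0.
  assert (0 <= Cmod (v x - b)) by apply Cmod_ge_0.
  assert (0 <= Cmod (u x - a)) by apply Cmod_ge_0.
  assert ((Cmod a + Cmod b + 1) * d <= eps).
  { apply Rle_trans with ((Cmod a + Cmod b + 1) * (eps / (Cmod a + Cmod b + 1))).
    apply Rmult_le_compat_l; lra. right; field; lra. }
  assert (Cmod (u x) * Cmod (v x - b) <= (Cmod a + 1) * Cmod (v x - b)) by (apply Rmult_le_compat_r; lra).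
  assert ((Cmod a + 1) * Cmod (v x - b) < (Cmod a + 1) * d) by (apply Rmult_lt_compat_l; lra).
  assert (Cmod b * Cmod (u x - a) <= Cmod b * d) by (apply Rmult_le_compat_l; lra).
  nra.
Qed.

Lemma clim_const (a : C) : clim F (fun _ => a) a.
Proof.
  intros eps Heps. apply filter_imp with (fun _ => True); [|apply filter_true].
  intros. replace (a - a)%C with (RtoC 0) by ring. rewrite Cmod_0. lra.
Qed.

Lemma clim_sub u v a b : clim F u a -> clim F v b -> clim F (fun x => u x - v x)%C (a - b)%C.
Proof.
  intros Hu Hv. unfold Cminus.
  apply clim_add; auto.
  replace (fun x => - v x)%C with (fun x => (RtoC (-1)) * v x)%C.
  replace (- b)%C with (RtoC (-1) * b)%C by ring.
  apply clim_mul; auto. apply clim_const.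
  apply functional_extensionality_dep; intros; ring.
Qed.

Lemma clim_conj u a : clim F u a -> clim F (fun x => Cconj (u x)) (Cconj a).
Proof.
  intros Hu eps Heps. apply filter_imp with (2 := Hu eps Heps).
  intros x H. rewrite <- Cminus_conj, Cmod_conj. exact H.
Qed.

Lemma clim_inv u (a : C) : a <> 0 -> clim F u a -> clim F (fun x => / u x)%C (/ a)%C.
Proof.
  intros Ha Hu eps Heps.
  assert (Hm : 0 < Cmod a) by (apply Cmod_gt_0; auto).
  set (d := Rmin (Cmod a / 2) (eps * Cmod a ^ 2 / 2)).
  assert (Hd : 0 < d) by (apply Rmin_pos; [lra| apply Rmult_lt_0_compat; [apply Rmult_lt_0_compat; [lra|nra]|lra]]).
  apply filter_imp with (2 := Hu d Hd).
  intros x Hx.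
  assert (Hd1 : d <= Cmod a / 2) by apply Rmin_l.
  assert (Hd2 : d <= eps * Cmod a ^ 2 / 2) by apply Rmin_r.
  assert (Hux : Cmod a / 2 <= Cmod (u x)).
  { pose proof (Cmod_minus_ge a (u x)). rewrite Cmod_sym in H. lra. }
  assert (Hnz : u x <> 0) by (intro E; rewrite E, Cmod_0 in Hux; lra).
  replace (/ u x - / a)%C with ((a - u x) / (u x * a))%C by (field; auto).
  rewrite Cmod_div by (apply Cmult_neq_0; auto). rewrite Cmod_mult, Cmod_sym.
  apply Rlt_le_trans with (d / (Cmod (u x) * Cmod a)).
  - apply Rmult_lt_compat_r; [apply Rinv_0_lt_compat; nra| lra].
  - apply Rle_trans with ((eps * Cmod a ^ 2 / 2) / (Cmod (u x) * Cmod a)).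
    + apply Rmult_le_compat_r; [left; apply Rinv_0_lt_compat; nra| lra].
    + apply Rle_trans with ((eps * Cmod a ^ 2 / 2) / (Cmod a / 2 * Cmod a)).
      * apply Rmult_le_compat_l; [left; apply Rmult_lt_0_compat; [apply Rmult_lt_0_compat; [lra|nra]|lra]|].
        apply Rinv_le_contravar; nra.
      * right. field. lra.
Qed.

Lemma clim_div u v (a b : C) : b <> 0 -> clim F u a -> clim F v b -> clim F (fun x => u x / v x)%C (a / b)%C.
Proof. intros Hb Hu Hv. apply clim_mul; auto. apply clim_inv; auto. Qed.

Lemma clim_ext u v a : (forall x, u x = v x) -> clim F u a -> clim F v a.
Proof. intros E H eps He. apply filter_imp with (2 := H eps He). intros x. rewrite E. auto. Qed.

End Lims.

Lemma clim_re_nonneg {T} (F : (T -> Prop) -> Prop) {FF : ProperFilter F} u l :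
  F (fun x => 0 <= Re (u x)) -> clim F u l -> 0 <= Re l.
Proof.
  intros H1 H2. destruct (Rle_or_lt 0 (Re l)) as [|Hl]; auto.
  assert (Hl2 : 0 < - Re l) by lra.
  assert (Hf := filter_and _ _ H1 (H2 (- Re l) Hl2)).
  destruct (filter_ex _ Hf) as [x [Hx1 Hx2]].
  pose proof (re_le_Cmod (u x - l)).
  assert (Re (u x - l) = Re (u x) - Re l) by (destruct (u x), l; unfold Re, Cminus, Cplus, Copp; simpl; ring).
  rewrite H0 in H. apply Rabs_le_between in H. lra.
Qed.

Lemma clim_unique {T} (F : (T -> Prop) -> Prop) {FF : ProperFilter F} u a b :
  clim F u a -> clim F u b -> a = b.
Proof.
  intros Ha Hb. destruct (classic (a = b)) as [|Hn]; auto.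
  assert (Hp : 0 < Cmod (a - b)) by (apply Cmod_gt_0; intro E; apply Hn; apply Ceq_minus; auto).
  assert (Hp2 : 0 < Cmod (a-b)/2) by lra.
  assert (Hf := filter_and _ _ (Ha _ Hp2) (Hb _ Hp2)).
  destruct (filter_ex _ Hf) as [x [H1 H2]].
  pose proof (Cmod_minus_le (u x - b) (u x - a)).
  replace (u x - b - (u x - a))%C with (a - b)%C in H by ring.
  lra.
Qed.

Lemma locally_Cmod (p : C) (r : R) : 0 < r -> locally p (fun y => Cmod (y - p) < r).
Proof.
  intros Hr. exact (locally_ball_norm (K := C_AbsRing) (V := C_NormedModule) p (mkposreal r Hr)).
Qed.

Lemma Cmod_ball (p y : C) (r : R) : Cmod (y - p) < r -> ball p r y.
Proof. intros H. apply (norm_compat1 (K := C_AbsRing) (V := C_NormedModule)). exact H. Qed.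

Lemma locally_ex (p : C) (Q : C -> Prop) : locally p Q -> exists r, 0 < r /\ forall y, Cmod (y - p) < r -> Q y.
Proof.
  intros [eps H]. exists eps. split; [apply cond_pos|]. intros y Hy. apply H. apply Cmod_ball. auto.
Qed.

Definition dense_at (E : C -> Prop) (p : C) : Prop := forall d, 0 < d -> exists x, E x /\ Cmod (x - p) < d.

Lemma within_proper E p : dense_at E p -> ProperFilter (within E (locally p)).
Proof.
  intros Hd. constructor.
  - intros P HP. unfold within in HP. apply locally_ex in HP. destruct HP as [r [Hr HP]].
    destruct (Hd r Hr) as [x [Ex Hx]]. exists x. apply HP; auto.
  - apply within_filter. apply locally_filter.
Qed.

Lemma lim_exists (h : C -> C) E p d0 M : 0 < d0 -> 0 <= M -> dense_at E p ->
  (forall x y, E x -> E y -> Cmod (x - p) < d0 -> Cmod (y - p) < d0 -> Cmod (h x - h y) <= M * Cmod (x - y)) ->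
  exists L, clim (within E (locally p)) h L.
Proof.
  intros Hd0 HM Hd HL.
  assert (PF := within_proper E p Hd).
  destruct (proj1 (filterlim_locally_cauchy (U := C_CompleteNormedModule) (F := within E (locally p)) h)) as [y Hy].
  - intros eps.
    set (eta := Rmin d0 (eps / (2 * M + 1))).
    assert (Heta : 0 < eta) by (apply Rmin_pos; auto; apply Rdiv_lt_0_compat; [apply cond_pos|lra]).
    exists (fun x => E x /\ Cmod (x - p) < eta). split.
    + unfold within. apply filter_imp with (2 := locally_Cmod p eta Heta). intros x Hx Ex. auto.
    + intros u v [Eu Hu] [Ev Hv]. apply Cmod_ball.
      assert (eta <= d0) by apply Rmin_l. assert (eta <= eps / (2 * M + 1)) by apply Rmin_r.
      pose proof (cond_pos eps).
      rewrite Cmod_sym. eapply Rle_lt_trans. apply HL; auto; lra.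
      assert (Cmod (u - v) < 2 * eta).
      { replace (u - v)%C with ((u - p) - (v - p))%C by ring.
        eapply Rle_lt_trans. apply Cmod_minus_le. lra. }
      assert (2 * M * eta <= 2 * M * (eps / (2 * M + 1))) by (apply Rmult_le_compat_l; lra).
      assert (2 * M * (eps / (2 * M + 1)) < eps).
      { apply Rmult_lt_reg_r with (2 * M + 1). lra. field_simplify; lra. }
      assert (0 <= Cmod (u - v)) by apply Cmod_ge_0.
      nra.
  - exists y. apply clim_filterlim; auto. apply PF.
Qed.

Lemma lip_cont (h : C -> C) E p d0 M : 0 < d0 -> 0 <= M ->
  (forall x, E x -> Cmod (x - p) < d0 -> Cmod (h x - h p) <= M * Cmod (x - p)) ->
  clim (within E (locally p)) h (h p).
Proof.
  intros Hd0 HM HL eps Heps.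
  set (eta := Rmin d0 (eps / (M + 1))).
  assert (Heta : 0 < eta) by (apply Rmin_pos; auto; apply Rdiv_lt_0_compat; lra).
  unfold within. apply filter_imp with (2 := locally_Cmod p eta Heta).
  intros x Hx Ex.
  assert (eta <= d0) by apply Rmin_l. assert (eta <= eps / (M + 1)) by apply Rmin_r.
  eapply Rle_lt_trans. apply HL; auto; lra.
  assert (M * eta <= M * (eps / (M + 1))) by (apply Rmult_le_compat_l; lra).
  assert (M * (eps / (M + 1)) < eps).
  { apply Rmult_lt_reg_r with (M + 1). lra. field_simplify; lra. }
  assert (0 <= Cmod (x - p)) by apply Cmod_ge_0.
  nra.
Qed.

Lemma clim_id_within E p : clim (within E (locally p)) (fun x => x) p.
Proof.
  intros eps Heps. unfold within. apply filter_imp with (2 := locally_Cmod p eps Heps). auto.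
Qed.

Lemma local_lip (h : C -> C) (E : C -> Prop) :
  (forall x, E x -> Cmod x < 1) ->
  (forall z, E z -> Cmod (h z) <= 1) ->
  (forall z w, E z -> E w -> Lip2 (h z) (h w) z w) ->
  forall p, Cmod p < 1 -> exists d0 M, 0 < d0 /\ 0 <= M /\
    forall x y, E x -> E y -> Cmod (x - p) < d0 -> Cmod (y - p) < d0 ->
      Cmod (h x - h y) <= M * Cmod (x - y).
Proof.
  intros Hsub Hb HL p Hp.
  pose proof (Cmod_ge_0 p).
  set (r := (1 + Cmod p) / 2).
  exists ((1 - Cmod p) / 2), (2 / (1 - r)). split; [lra|]. split.
  { apply Rdiv_le_0_compat; unfold r; lra. }
  intros x y Ex Ey Hx Hy.
  assert (Hxr : Cmod x <= r).
  { pose proof (Cmod_minus_ge x p). unfold r. lra. }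
  assert (Hyr : Cmod y <= r).
  { pose proof (Cmod_minus_ge y p). unfold r. lra. }
  assert (Hr : r < 1) by (unfold r; lra).
  pose proof (lip_bound (h x) (h y) x y r Hxr Hyr Hr (Hb x Ex) (Hb y Ey) (HL x y Ex Ey)).
  apply Rmult_le_reg_r with (1 - r). lra.
  replace (2 / (1 - r) * Cmod (x - y) * (1 - r)) with (2 * Cmod (x - y)) by (field; lra).
  exact H0.
Qed.

Lemma dense_disk_at E p : dense_disk E -> Cmod p < 1 -> dense_at E p.
Proof. intros H Hp d Hd. apply H; auto. Qed.

Lemma eventually_inv (eps : R) : 0 < eps -> eventually (fun n => / (INR n + 1) < eps).
Proof.
  intros He. destruct (archimed_cor1 eps He) as [N [HN HN0]].
  exists N. intros n Hn.
  apply Rle_lt_trans with (/ INR N); auto.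
  apply Rinv_le_contravar. apply lt_0_INR; lia.
  apply le_INR in Hn. lra.
Qed.

Lemma clim_opp {T} (F : (T -> Prop) -> Prop) {FF : Filter F} u (a : C) :
  clim F u a -> clim F (fun x => - u x)%C (- a)%C.
Proof.
  intros Hu eps He. apply filter_imp with (2 := Hu eps He). intros x H.
  replace (- u x - - a)%C with (- (u x - a))%C by ring. rewrite Cmod_opp. auto.
Qed.

Ltac climt := repeat (first [assumption | apply (@filter_filter _ _ eventually_filter) | apply clim_const | apply clim_add | apply clim_sub | apply clim_mul | apply clim_conj | apply clim_div | apply clim_opp | apply clim_inv]).

Lemma clim_Kf {T} (F : (T -> Prop) -> Prop) {FF : Filter F} (f S : C -> C) (x y : T -> C) (a b : C) :
  (1 - a * Cconj b)%C <> 0 ->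
  clim F x a -> clim F y b -> clim F (fun n => f (x n)) (S a) -> clim F (fun n => f (y n)) (S b) ->
  clim F (fun n => Kf f (x n) (y n)) (Kf S a b).
Proof.
  intros Hab Hx Hy Hfx Hfy. unfold Kf. climt.
Qed.

Definition Dk (z : C) : Prop := Cmod z < 1.

Lemma extension (f : C -> C) (E : C -> Prop) :
  (forall x, E x -> Cmod x < 1) -> dense_disk E -> R3 f E ->
  exists S : C -> C, R3 S Dk /\ forall z, E z -> S z = f z.
Proof.
  intros Hsub Hd HR.
  destruct (R3_lip f E Hsub Hd HR) as [Hb HL].
  assert (HLL := local_lip f E Hsub Hb HL).
  assert (Hex : forall p, exists L, Cmod p < 1 -> clim (within E (locally p)) f L).
  { intros p. destruct (classic (Cmod p < 1)) as [Hp|Hp].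
    - destruct (HLL p Hp) as [d0 [M [Hd0 [HM HLp]]]].
      destruct (lim_exists f E p d0 M Hd0 HM (dense_disk_at E p Hd Hp) HLp) as [L HLim].
      exists L. auto.
    - exists (RtoC 0). intros; contradiction. }
  set (S := fun p => proj1_sig (constructive_indefinite_description _ (Hex p))).
  assert (HS : forall p, Cmod p < 1 -> clim (within E (locally p)) f (S p)).
  { intros p Hp. unfold S. destruct (constructive_indefinite_description _ (Hex p)). simpl. auto. }
  exists S. split.
  2:{ intros z Ez.
      assert (Hz := Hsub z Ez).
      destruct (HLL z Hz) as [d0 [M [Hd0 [HM HLp]]]].
      assert (Hc : clim (within E (locally z)) f (f z)).
      { apply (lip_cont f E z d0 M Hd0 HM). intros x Ex Hx. apply HLp; auto.
        replace (z - z)%C with (RtoC 0) by ring. rewrite Cmod_0. auto. }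
      apply (clim_unique (within E (locally z)) (FF := within_proper E z (dense_disk_at E z Hd Hz)) f); auto. }
  intros z Hz Hdist c.
  set (rho := Rmin (Cmod (z 0%nat - z 1%nat)) (Rmin (Cmod (z 0%nat - z 2%nat)) (Cmod (z 1%nat - z 2%nat))) / 2).
  assert (Hpos : forall i j, (i < 3)%nat -> (j < 3)%nat -> i <> j -> 2 * rho <= Cmod (z i - z j)).
  { intros i j Hi Hj Hij. unfold rho.
    pose proof (Rmin_l (Cmod (z 0%nat - z 1%nat)) (Rmin (Cmod (z 0%nat - z 2%nat)) (Cmod (z 1%nat - z 2%nat)))).
    pose proof (Rmin_r (Cmod (z 0%nat - z 1%nat)) (Rmin (Cmod (z 0%nat - z 2%nat)) (Cmod (z 1%nat - z 2%nat)))).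
    pose proof (Rmin_l (Cmod (z 0%nat - z 2%nat)) (Cmod (z 1%nat - z 2%nat))).
    pose proof (Rmin_r (Cmod (z 0%nat - z 2%nat)) (Cmod (z 1%nat - z 2%nat))).
    destruct i as [|[|[|i]]]; destruct j as [|[|[|j]]]; try lia; rewrite ?(Cmod_sym (z 1%nat) (z 0%nat)), ?(Cmod_sym (z 2%nat) (z 0%nat)), ?(Cmod_sym (z 2%nat) (z 1%nat)); lra. }
  assert (Hrho : 0 < rho).
  { unfold rho. apply Rdiv_lt_0_compat; [|lra].
    assert (forall i j, (i < 3)%nat -> (j < 3)%nat -> i <> j -> 0 < Cmod (z i - z j)).
    { intros i j Hi Hj Hij. apply Cmod_gt_0. intro E'. apply (Hdist i j Hi Hj Hij). apply Ceq_minus. auto. }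
    apply Rmin_pos; [apply H; lia|]. apply Rmin_pos; apply H; lia. }
  assert (Hpt : forall i n, exists x, (i < 3)%nat -> E x /\ Cmod (x - z i) < Rmin rho (/ (INR n + 1)) /\
                                  Cmod (f x - S (z i)) < / (INR n + 1)).
  { intros i n. destruct (Nat.lt_ge_cases i 3) as [Hi|Hi]; [|exists (RtoC 0); intros; lia].
    assert (Hn : 0 < / (INR n + 1)) by (apply Rinv_0_lt_compat; pose proof (pos_INR n); lra).
    assert (Hr : 0 < Rmin rho (/ (INR n + 1))) by (apply Rmin_pos; auto).
    assert (Hf := HS (z i) (Hz i Hi) _ Hn). unfold within in Hf.
    destruct (locally_ex _ _ (filter_and _ _ Hf (locally_Cmod (z i) _ Hr))) as [r [Hr0 Hrr]].
    destruct (Hd (z i) (Hz i Hi) r Hr0) as [x [Ex Hx]].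
    exists x. intros _. destruct (Hrr x Hx) as [H1 H2]. auto. }
  set (X := fun i n => proj1_sig (constructive_indefinite_description _ (Hpt i n))).
  assert (HX : forall i n, (i < 3)%nat -> E (X i n) /\ Cmod (X i n - z i) < Rmin rho (/ (INR n + 1)) /\
                                  Cmod (f (X i n) - S (z i)) < / (INR n + 1)).
  { intros i n Hi. unfold X. destruct (constructive_indefinite_description _ (Hpt i n)). simpl. auto. }
  assert (Hnn : forall n, 0 <= Re (pick_form 3 f (fun i => X i n) c)).
  { intros n. apply HR.
    - intros i Hi. apply HX; auto.
    - intros i j Hi Hj Hij E'.
      destruct (HX i n Hi) as [_ [H1 _]]. destruct (HX j n Hj) as [_ [H2 _]].
      pose proof (Rmin_l rho (/ (INR n + 1))) as G1.
      pose proof (Hpos i j Hi Hj Hij) as G2.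
      pose proof (Cmod_minus_le (X j n - z j) (X i n - z i)) as G3.
      replace (X j n - z j - (X i n - z i))%C with (z i - z j)%C in G3 by (rewrite E'; ring).
      pose proof (Rmin_l rho (/ (INR n + 1))). lra. }
  assert (Hcx : forall i, (i < 3)%nat -> clim eventually (fun n => X i n) (z i)).
  { intros i Hi eps He. apply filter_imp with (2 := eventually_inv eps He).
    intros n Hn. destruct (HX i n Hi) as [_ [H1 _]]. pose proof (Rmin_r rho (/ (INR n + 1))). lra. }
  assert (Hcf : forall i, (i < 3)%nat -> clim eventually (fun n => f (X i n)) (S (z i))).
  { intros i Hi eps He. apply filter_imp with (2 := eventually_inv eps He).
    intros n Hn. destruct (HX i n Hi) as [_ [_ H1]]. lra. }
  assert (Hnz : forall i j, (i < 3)%nat -> (j < 3)%nat -> (1 - z i * Cconj (z j))%C <> 0).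
  { intros i j Hi Hj. apply one_minus_nz; apply Hz; auto. }
  assert (HK : forall i j, (i < 3)%nat -> (j < 3)%nat ->
     clim eventually (fun n => Kf f (X i n) (X j n)) (Kf S (z i) (z j))).
  { intros i j Hi Hj. apply (@clim_Kf nat eventually (@filter_filter _ _ eventually_filter)); auto. }
  apply (clim_re_nonneg eventually (fun n => pick_form 3 f (fun i => X i n) c)).
  - exists 0%nat. intros n _. auto.
  - rewrite (functional_extensionality _ _ (fun n => pick3_expand f (fun i => X i n) c)).
    rewrite pick3_expand.
    repeat (first [apply HK; lia | apply (@filter_filter _ _ eventually_filter) | apply clim_const | apply clim_add | apply clim_mul | apply clim_conj]).
Qed.

Lemma N3 (x y : C) : Cmod x < 1 -> Cmod y <= 1 -> (1 - Cconj x * y)%C <> 0.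
Proof.
  intros Hx Hy E'. assert (Cmod (Cconj x * y) = 1).
  { replace (Cconj x * y)%C with (RtoC 1). apply Cmod_1.
    rewrite <- (Cplus_0_l (Cconj x * y)). rewrite <- E'. ring. }
  rewrite Cmod_mult, Cmod_conj in H. pose proof (Cmod_ge_0 x). pose proof (Cmod_ge_0 y). nra.
Qed.

Lemma N4 (x y : C) : Cmod x < 1 -> Cmod y <= 1 -> (1 - x * Cconj y)%C <> 0.
Proof.
  intros Hx Hy E'. apply (N3 x y Hx Hy).
  replace (1 - Cconj x * y)%C with (Cconj (1 - x * Cconj y)) by (pushconj; reflexivity).
  rewrite E'. apply Cconj_R.
Qed.

Lemma N2 (x y : C) : Cmod x < 1 -> Cmod y < 1 -> (1 - Cconj x * y)%C <> 0.
Proof. intros. apply N3; auto; lra. Qed.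

Lemma N1 (x y : C) : Cmod x < 1 -> Cmod y < 1 -> (1 - x * Cconj y)%C <> 0.
Proof. intros. apply one_minus_nz; auto. Qed.

Lemma Nsub (x a : C) : x <> a -> (x - a)%C <> 0.
Proof. intros H E'. apply H. apply Ceq_minus. auto. Qed.

Lemma Nsubc (x a : C) : x <> a -> (Cconj x - Cconj a)%C <> 0.
Proof.
  intros H E'. apply (Nsub x a H). rewrite <- (Cconj_conj (x - a)%C).
  rewrite Cminus_conj, E'. apply Cconj_R.
Qed.

Lemma Nconj (x a : C) : x <> a -> Cconj x <> Cconj a.
Proof. intros H E'. apply H. rewrite <- (Cconj_conj x), E', Cconj_conj. reflexivity. Qed.

Ltac Nsolve := first [ solve [apply N1; auto] | solve [apply N2; auto] | solve [apply N3; auto] | solve [apply N4; auto]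
                      | solve [apply Nsub; auto] | solve [apply Nsubc; auto] | solve [apply Nconj; auto] | idtac ].

Definition gS (S : C -> C) (a : C) (x : C) : C :=
  (((S x - S a) / (1 - Cconj (S a) * S x)) / ((x - a) / (1 - Cconj a * x)))%C.
Definition uS (S : C -> C) (a : C) (x : C) : C :=
  (((x - a) / (1 - Cconj a * x)) * (1 - Cconj (S a) * S x))%C.

Lemma Kg_identity (S : C -> C) (a x y : C) :
  Cmod a < 1 -> Cmod x < 1 -> Cmod y < 1 -> x <> a -> y <> a ->
  Cmod (S a) < 1 -> Cmod (S x) <= 1 -> Cmod (S y) <= 1 ->
  Kf (gS S a) x y = ((1 - Cconj (S a) * S a) * (Kf S x y - Kf S x a * Kf S a y / Kf S a a)
                     / (uS S a x * Cconj (uS S a y)))%C.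
Proof.
  intros Ha Hx Hy Hxa Hya Hal Hsx Hsy.
  unfold Kf, gS, uS. pushconj.
  field.
  repeat split; Nsolve.
Qed.

Lemma uS_nz S a x : Cmod a < 1 -> Cmod x < 1 -> x <> a -> Cmod (S a) < 1 -> Cmod (S x) <= 1 -> uS S a x <> 0.
Proof.
  intros. unfold uS. apply Cmult_neq_0.
  - unfold Cdiv. apply Cmult_neq_0. apply Nsub; auto.
    intro E'. assert (H4 : (/ (1 - Cconj a * x) * (1 - Cconj a * x))%C = 1) by (apply Cinv_l; apply N2; auto).
    rewrite E', Cmult_0_l in H4. apply C1_nz. auto.
  - apply N3; auto.
Qed.

Lemma Cconj_nz (x : C) : x <> 0 -> Cconj x <> 0.
Proof. intros H E'. apply H. rewrite <- (Cconj_conj x), E'. apply Cconj_R. Qed.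

Lemma Kaa_nz S a : Cmod a < 1 -> Cmod (S a) < 1 -> Kf S a a <> 0.
Proof.
  intros Ha Hal. rewrite Kf_diag by auto. intro E'. apply RtoC_inj in E'.
  assert (0 < 1 - Cmod (S a) ^ 2) by (pose proof (Cmod_ge_0 (S a)); nra).
  assert (0 < 1 - Cmod a ^ 2) by (pose proof (Cmod_ge_0 a); nra).
  assert (0 < (1 - Cmod (S a) ^ 2) / (1 - Cmod a ^ 2)) by (apply Rdiv_lt_0_compat; auto).
  lra.
Qed.

Lemma schur_alg (k K00 K0z K0w Kz0 Kzz Kzw Kw0 Kwz Kww uz uw cuz cuw d1 d2 cd1 cd2 : C) :
  K00 <> 0 -> uz <> 0 -> uw <> 0 -> cuz <> 0 -> cuw <> 0 ->
  (cd1 * (k * (Kzz - Kz0 * K0z / K00) / (uz * cuz)) * d1 +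
   cd1 * (k * (Kzw - Kz0 * K0w / K00) / (uz * cuw)) * d2 +
   cd2 * (k * (Kwz - Kw0 * K0z / K00) / (uw * cuz)) * d1 +
   cd2 * (k * (Kww - Kw0 * K0w / K00) / (uw * cuw)) * d2)%C =
  (k *
   (- (Kz0 * (cd1 / uz) + Kw0 * (cd2 / uw)) / K00 * K00 *
    (- (K0z * (d1 / cuz) + K0w * (d2 / cuw)) / K00) +
    - (Kz0 * (cd1 / uz) + Kw0 * (cd2 / uw)) / K00 * K0z * (d1 / cuz) +
    - (Kz0 * (cd1 / uz) + Kw0 * (cd2 / uw)) / K00 * K0w * (d2 / cuw) +
    (cd1 / uz * Kz0 * (- (K0z * (d1 / cuz) + K0w * (d2 / cuw)) / K00) +
     cd1 / uz * Kzz * (d1 / cuz) + cd1 / uz * Kzw * (d2 / cuw)) +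
    (cd2 / uw * Kw0 * (- (K0z * (d1 / cuz) + K0w * (d2 / cuw)) / K00) +
     cd2 / uw * Kwz * (d1 / cuz) + cd2 / uw * Kww * (d2 / cuw))))%C.
Proof. intros. field. repeat split; auto. Qed.

Lemma schur_form (S : C -> C) (a z w d1 d2 : C) :
  Cmod a < 1 -> Cmod z < 1 -> Cmod w < 1 -> z <> a -> w <> a ->
  Cmod (S a) < 1 -> Cmod (S z) <= 1 -> Cmod (S w) <= 1 ->
  exists c : nat -> C,
    form2 (Kf (gS S a) z z) (Kf (gS S a) z w) (Kf (gS S a) w z) (Kf (gS S a) w w) d1 d2 =
    ((1 - Cconj (S a) * S a) * pick_form 3 S (pts3 a z w) c)%C.
Proof.
  intros Ha Hz Hw Hza Hwa Hal Hsz Hsw.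
  set (c1 := (d1 / Cconj (uS S a z))%C). set (c2 := (d2 / Cconj (uS S a w))%C).
  set (c0 := (- (Kf S a z * c1 + Kf S a w * c2) / Kf S a a)%C).
  exists (pts3 c0 c1 c2).
  rewrite pick3_expand. cbv beta iota delta [pts3].
  rewrite (Kg_identity S a z z), (Kg_identity S a z w), (Kg_identity S a w z), (Kg_identity S a w w) by auto.
  assert (Hc0 : Cconj c0 = (- (Kf S z a * Cconj c1 + Kf S w a * Cconj c2) / Kf S a a)%C).
  { unfold c0. rewrite Cconj_div_all, Copp_conj, Cplus_conj, !Cmult_conj, !Kf_conj. reflexivity. }
  rewrite Hc0.
  assert (Hc1 : Cconj c1 = (Cconj d1 / uS S a z)%C) by (unfold c1; rewrite Cconj_div_all, Cconj_conj; reflexivity).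
  assert (Hc2 : Cconj c2 = (Cconj d2 / uS S a w)%C) by (unfold c2; rewrite Cconj_div_all, Cconj_conj; reflexivity).
  rewrite Hc1, Hc2. unfold form2, c0, c1, c2.
  assert (U1 := uS_nz S a z Ha Hz Hza Hal Hsz).
  assert (U2 := uS_nz S a w Ha Hw Hwa Hal Hsw).
  assert (U3 := Cconj_nz _ U1). assert (U4 := Cconj_nz _ U2).
  assert (K0 := Kaa_nz S a Ha Hal).
  apply schur_alg; auto.
Qed.

Lemma re_kappa (al X : C) : Re ((1 - Cconj al * al) * X)%C = (1 - Cmod al ^ 2) * Re X.
Proof. rewrite Cmod_sq. destruct al, X. unfold Re. simpl. ring. Qed.

Lemma psd2_lip h E : (forall x, E x -> Cmod x < 1) -> dense_disk E ->
  (forall z w, E z -> E w -> z <> w -> forall c0 c1,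
      0 <= Re (form2 (Kf h z z) (Kf h z w) (Kf h w z) (Kf h w w) c0 c1)) ->
  (forall z, E z -> Cmod (h z) <= 1) /\
  (forall z w, E z -> E w -> Lip2 (h z) (h w) z w).
Proof.
  intros Hsub Hd HP. split.
  - intros z Hz. destruct (thirdpt E Hd z z) as [w [Hw [Hwz _]]].
    apply (two_point h z w (Hsub z Hz) (Hsub w Hw)).
    apply HP; auto.
  - intros z w Hz Hw. destruct (classic (z = w)) as [E'|E'].
    + subst. unfold Lip2. replace (h w - h w)%C with (RtoC 0) by ring.
      replace (w - w)%C with (RtoC 0) by ring. rewrite Cmod_0. nra.
    + apply (two_point h z w (Hsub z Hz) (Hsub w Hw)). apply HP; auto.
Qed.

Definition Punct (a : C) (z : C) : Prop := Cmod z < 1 /\ z <> a.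

Lemma dense_punct a : Cmod a < 1 -> dense_disk (Punct a).
Proof.
  intros Ha p Hp d Hd. destruct (classic (p = a)) as [E'|E'].
  - subst p. set (m := Rmin d (1 - Cmod a) / 2).
    assert (Hm1 : Rmin d (1 - Cmod a) <= d) by apply Rmin_l.
    assert (Hm2 : Rmin d (1 - Cmod a) <= 1 - Cmod a) by apply Rmin_r.
    assert (Hm0 : 0 < Rmin d (1 - Cmod a)) by (apply Rmin_pos; lra).
    exists (a + RtoC m)%C.
    assert (Hc : Cmod (a + RtoC m - a) = m).
    { replace (a + RtoC m - a)%C with (RtoC m) by ring. apply Cmod_RtoC_pos. unfold m; lra. }
    split; [split|].
    + pose proof (Cmod_triangle a (RtoC m)). rewrite Cmod_RtoC_pos in H by (unfold m; lra). unfold m in *; lra.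
    + intro E2. rewrite E2 in Hc. replace (a - a)%C with (RtoC 0) in Hc by ring. rewrite Cmod_0 in Hc. unfold m in Hc; lra.
    + rewrite Hc. unfold m; lra.
  - exists p. split. split; auto. replace (p - p)%C with (RtoC 0) by ring. rewrite Cmod_0. auto.
Qed.

Lemma locallyK (a : C) (P : C -> Prop) (r : R) : 0 < r -> (forall y, Cmod (y - a) < r -> P y) ->
  @locally (AbsRing_UniformSpace C_AbsRing) a P.
Proof.
  intros Hr H. exists (mkposreal r Hr). intros y Hy. apply H. exact Hy.
Qed.

Lemma derive_from_q (S q : C -> C) (a l : C) : Cmod a < 1 ->
  (forall z, Cmod z < 1 -> z <> a -> (S z - S a)%C = ((z - a) * q z)%C) ->
  clim (within (Punct a) (locally a)) q l ->
  is_derive S a l.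
Proof.
  intros Ha Hid Hq. split.
  - apply is_linear_scal_l.
  - intros x Hx. apply (is_filter_lim_locally_unique (K := C_AbsRing) (V := AbsRing_NormedModule C_AbsRing)) in Hx. subst x.
    intros eps.
    assert (Hf := Hq eps (cond_pos eps)). unfold within in Hf.
    destruct (locally_ex _ _ Hf) as [r [Hr Hrr]].
    apply locallyK with (Rmin r (1 - Cmod a)).
    { apply Rmin_pos; lra. }
    intros y Hy.
    assert (Hy1 : Cmod (y - a) < r) by (pose proof (Rmin_l r (1 - Cmod a)); lra).
    assert (Hy2 : Cmod (y - a) < 1 - Cmod a) by (pose proof (Rmin_r r (1 - Cmod a)); lra).
    change (Cmod (S y - S a - (y - a) * l)%C <= eps * Cmod (y - a)).
    destruct (classic (y = a)) as [E'|E'].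
    + subst y. replace (S a - S a - (a - a) * l)%C with (RtoC 0) by ring.
      replace (a - a)%C with (RtoC 0) by ring. rewrite Cmod_0. lra.
    + assert (Hyd : Cmod y < 1) by (pose proof (Cmod_minus_ge y a); lra).
      rewrite Hid by auto.
      replace ((y - a) * q y - (y - a) * l)%C with ((y - a) * (q y - l))%C by ring.
      rewrite Cmod_mult.
      assert (Cmod (q y - l) < eps) by (apply Hrr; auto; split; auto).
      pose proof (Cmod_ge_0 (y - a)). nra.
Qed.

Lemma dense_Dk : dense_disk Dk.
Proof.
  intros p Hp d Hd. exists p. split; auto. replace (p - p)%C with (RtoC 0) by ring. rewrite Cmod_0. auto.
Qed.

Lemma hindmarsh_disk (S : C -> C) : R3 S Dk -> forall a, Cmod a < 1 -> ex_derive S a.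
Proof.
  intros HR a Ha.
  destruct (R3_lip S Dk (fun x H => H) dense_Dk HR) as [Hb HL].
  assert (Hal : Cmod (S a) <= 1) by (apply Hb; exact Ha).
  destruct (Rle_lt_or_eq_dec _ _ Hal) as [Hlt|Heq].
  2:{
    assert (Hc : forall z, Cmod z < 1 -> S a = S z).
    { intros z Hz. pose proof (HL a z Ha Hz) as HLz. unfold Lip2 in HLz.
      rewrite (idC (S a) (S z)), (idC a z), Heq in HLz.
      assert (P : 0 < (1 - Cmod a ^ 2) * (1 - Cmod z ^ 2)).
      { pose proof (Cmod_ge_0 a). pose proof (Cmod_ge_0 z). apply Rmult_lt_0_compat; nra. }
      assert (Hz0 : Cmod (S a - S z) ^ 2 * ((1 - Cmod a ^ 2) * (1 - Cmod z ^ 2)) <= 0) by nra.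
      assert (Cmod (S a - S z) ^ 2 <= 0).
      { apply Rmult_le_reg_r with ((1 - Cmod a ^ 2) * (1 - Cmod z ^ 2)); auto. lra. }
      assert (Cmod (S a - S z) = 0) by (pose proof (Cmod_ge_0 (S a - S z)); nra).
      apply Ceq_minus. apply Cmod_eq_0. auto. }
    exists zero. apply is_derive_ext_loc with (fun _ => S a).
    - apply locallyK with (1 - Cmod a). lra.
      intros y Hy. apply Hc. pose proof (Cmod_minus_ge y a). lra.
    - apply is_derive_const. }
  set (al := S a) in *.
  set (E' := Punct a).
  assert (Hsub : forall x, E' x -> Cmod x < 1) by (intros x [H _]; auto).
  assert (HdE : dense_disk E') by (apply dense_punct; auto).
  assert (HP : forall z w, E' z -> E' w -> z <> w -> forall c0 c1,
      0 <= Re (form2 (Kf (gS S a) z z) (Kf (gS S a) z w) (Kf (gS S a) w z) (Kf (gS S a) w w) c0 c1)).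
  { intros z w [Hz Hza] [Hw Hwa] Hzw c0 c1.
    destruct (schur_form S a z w c0 c1 Ha Hz Hw Hza Hwa Hlt (Hb z Hz) (Hb w Hw)) as [c Hc].
    rewrite Hc, re_kappa.
    apply Rmult_le_pos. fold al. pose proof (Cmod_ge_0 al). nra.
    apply HR. apply pts3_in; auto. apply pts3_dist; auto. }
  destruct (psd2_lip (gS S a) E' Hsub HdE HP) as [Hbg HLg].
  destruct (local_lip (gS S a) E' Hsub Hbg HLg a Ha) as [d0 [M [Hd0 [HM HLa]]]].
  destruct (lim_exists (gS S a) E' a d0 M Hd0 HM (dense_disk_at E' a HdE Ha) HLa) as [L HL0].
  destruct (local_lip S Dk (fun x H => H) Hb HL a Ha) as [d1 [M1 [Hd1 [HM1 HLS]]]].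
  assert (HSc : clim (within E' (locally a)) S al).
  { apply (lip_cont S E' a d1 M1 Hd1 HM1). intros x Ex Hx. apply HLS; auto. apply Hsub; auto.
    replace (a - a)%C with (RtoC 0) by ring. rewrite Cmod_0. auto. }
  assert (FW : Filter (within E' (locally a))) by (apply within_filter; apply locally_filter).
  set (q := fun z => (gS S a z * (1 - Cconj al * S z) / (1 - Cconj a * z))%C).
  assert (Hq : clim (within E' (locally a)) q (L * (1 - Cconj al * al) / (1 - Cconj a * a))%C).
  { unfold q.
    apply (@clim_div _ _ FW). apply N2; auto.
    - apply (@clim_mul _ _ FW); auto.
      apply (@clim_sub _ _ FW). apply (@clim_const _ _ FW).
      apply (@clim_mul _ _ FW); auto. apply (@clim_const _ _ FW).
    - apply (@clim_sub _ _ FW). apply (@clim_const _ _ FW).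
      apply (@clim_mul _ _ FW); auto. apply (@clim_const _ _ FW). apply clim_id_within. }
  exists (L * (1 - Cconj al * al) / (1 - Cconj a * a))%C.
  apply (derive_from_q S q a); auto.
  intros z Hz Hza. unfold q, gS. fold al.
  field. repeat split; Nsolve.
Qed.

Lemma Dj_props (Dj Zj : nat -> C -> Prop) :
  (forall z, Dj 0%nat z <-> unit_disk z) ->
  (forall j, discrete_in (Zj j) (Dj j)) ->
  (forall j z, Dj (S j) z <-> (Dj j z /\ ~ Zj j z)) ->
  forall j, (forall z, Dj j z -> Cmod z < 1) /\
            (forall z, Dj j z -> exists r, 0 < r /\ forall y, Cmod (y - z) < r -> Dj j y) /\
            dense_disk (Dj j).
Proof.
  intros H0 Hdisc Hstep j. induction j as [|j [IHs [IHo IHd]]].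
  - split; [|split].
    + intros z Hz. apply H0 in Hz. exact Hz.
    + intros z Hz. apply H0 in Hz. unfold unit_disk in Hz. exists (1 - Cmod z). split; [lra|].
      intros y Hy. apply H0. unfold unit_disk. pose proof (Cmod_minus_ge y z). lra.
    + intros p Hp d Hd. exists p. split. apply H0. exact Hp.
      replace (p - p)%C with (RtoC 0) by ring. rewrite Cmod_0. auto.
  - destruct (Hdisc j) as [Zsub [_ Hacc]].
    split; [|split].
    + intros z Hz. apply Hstep in Hz. apply IHs. apply Hz.
    + intros z Hz. apply Hstep in Hz. destruct Hz as [Hz Hnz].
      destruct (IHo z Hz) as [r1 [Hr1 Hr1']].
      destruct (Hacc z Hz) as [eps [Heps Heps']].
      exists (Rmin r1 eps). split; [apply Rmin_pos; auto|].
      intros y Hy. apply Hstep. split.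
      * apply Hr1'. pose proof (Rmin_l r1 eps). lra.
      * intro Zy. destruct (classic (y = z)) as [E'|E'].
        -- subst; auto.
        -- apply (Heps' y Zy). split.
           ++ apply Cmod_gt_0. apply Nsub. auto.
           ++ pose proof (Rmin_r r1 eps). lra.
    + intros p Hp d Hd.
      destruct (IHd p Hp (d / 2)) as [x [Hx Hxp]]; [lra|].
      destruct (classic (Zj j x)) as [Zx|Zx].
      * destruct (IHo x Hx) as [r1 [Hr1 Hr1']].
        destruct (Hacc x Hx) as [eps [Heps Heps']].
        set (m := Rmin r1 (Rmin eps (d / 2)) / 2).
        assert (A1 : Rmin r1 (Rmin eps (d / 2)) <= r1) by apply Rmin_l.
        assert (A2 : Rmin r1 (Rmin eps (d / 2)) <= Rmin eps (d/2)) by apply Rmin_r.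
        assert (A3 : Rmin eps (d / 2) <= eps) by apply Rmin_l.
        assert (A4 : Rmin eps (d / 2) <= d / 2) by apply Rmin_r.
        assert (A0 : 0 < Rmin r1 (Rmin eps (d / 2))) by (apply Rmin_pos; auto; apply Rmin_pos; lra).
        assert (Hc : Cmod (x + RtoC m - x) = m).
        { replace (x + RtoC m - x)%C with (RtoC m) by ring. apply Cmod_RtoC_pos. unfold m; lra. }
        exists (x + RtoC m)%C. split.
        -- apply Hstep. split.
           ++ apply Hr1'. rewrite Hc. unfold m; lra.
           ++ intro Zy. apply (Heps' _ Zy). rewrite Hc. unfold m; lra.
        -- replace (x + RtoC m - p)%C with ((x + RtoC m - x) + (x - p))%C by ring.
           eapply Rle_lt_trans. apply Cmod_triangle. rewrite Hc. unfold m; lra.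
      * exists x. split; [|lra]. apply Hstep. auto.
Qed.

Theorem corollary6p2 (Dj Zj : nat -> C -> Prop) :
  (forall z, Dj 0%nat z <-> unit_disk z) ->
  (forall j, discrete_in (Zj j) (Dj j)) ->
  (forall j z, Dj (S j) z <-> (Dj j z /\ ~ Zj j z)) ->
  forall j, hindmarsh_property 3 (Dj j).
Proof.
  intros H0 Hdisc Hstep j.
  destruct (Dj_props Dj Zj H0 Hdisc Hstep j) as [Hsub [Hopen Hdense]].
  split; [|split].
  - intros x Hx. destruct (Hopen x Hx) as [r [Hr Hr']].
    apply filter_imp with (2 := locally_Cmod x r Hr). auto.
  - exact Hsub.
  - intros f Hf.
    assert (HR : R3 f (Dj j)).
    { intros z Hz Hd c. apply (Hf z Hz Hd c). }
    destruct (extension f (Dj j) Hsub Hdense HR) as [S0 [HRS HSf]].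
    exists S0. split; [|exact HSf].
    split.
    + intros z Hz. apply hindmarsh_disk; auto.
    + intros z Hz. apply (R3_lip S0 Dk (fun x H => H) dense_Dk HRS). exact Hz.
Qed.
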